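(* Let $\gamma$ be an ordinal of $\mathrm{OT}$, $\perp\!\!\!\perp$ any pole, and $\beta<\gamma$. For every $\mathcal L_{\mathrm R}^{<\beta}$-sentence $A$ and every number $a$: (1) $\langle{\perp\!\!\!\perp},<\gamma\rangle\models a\,F_\beta\,\ulcorner A\urcorner$ if and only if $\langle{\perp\!\!\!\perp},<\gamma\rangle\models a\in\|A\|$; (2) $\langle{\perp\!\!\!\perp},<\gamma\rangle\models a\,T_\beta\,\ulcorner A\urcorner$ if and only if $\langle{\perp\!\!\!\perp},<\gamma\rangle\models a\in|A|$.
   Context: $\mathcal{L}$ is the language of $\mathsf{PA}$ ($\to,\forall,=$, constant $0$, function symbols for all primitive recursive functions); $\langle x,y\rangle$ primitive recursive pairing with projections $(\cdot)_0,(\cdot)_1$; $e\cdot m\simeq n$: the $e$-th partial recursive function on $m$ halts with output $n$. Fixed Gödel numbering. $\mathrm{OT}$ is a standard notation system for predicative ordinals. $\mathcal L_{\mathrm R}^{<\gamma}$ is $\mathcal L$ plus unary $x\in{\perp\!\!\!\perp}$ and binary $x\,F_\beta\,y$, $x\,T_\beta\,y$ for $\beta<\gamma$; $\mathcal L_{\perp\!\!\!\perp}=\mathcal L\cup\{\in{\perp\!\!\!\perp}\}$; $\mathrm{Sent}^{<\beta}_{\mathrm R}$ is the set of codes of $\mathcal L_{\mathrm R}^{<\beta}$-sentences. Explicit refutation/realisation formulas, by recursion on $A$: $s\in\|P\|:=P\to s\in{\perp\!\!\!\perp}$ ($P$ atomic of $\mathcal L_{\perp\!\!\!\perp}$); $s\in\|t\,F_\beta\,u\|:=s\,F_\beta\,(t\,\dot\in\|u\|)$;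 $s\in\|t\,T_\beta\,u\|:=s\,F_\beta\,(t\,\dot\in|u|)$; $s\in\|A\to B\|:=(s)_0\in|A|\wedge(s)_1\in\|B\|$; $s\in\|\forall xA(x)\|:=(s)_1\in\|A((s)_0)\|$; $s\in|A|:=\forall a(a\in\|A\|\to\langle s,a\rangle\in{\perp\!\!\!\perp})$; here $x\,\dot\in\|y\|$, $x\,\dot\in|y|$ are primitive recursive function symbols with $x\,\dot\in\|\ulcorner A\urcorner\|=\ulcorner\dot x\in\|A\|\urcorner$ and $x\,\dot\in|\ulcorner A\urcorner|=\ulcorner\dot x\in|A|\urcorner$ ($\dot x$: numeral of $x$) for sentences $A$, returning non-sentence codes when $y$ is not a sentence code. A pole is $\perp\!\!\!\perp\subseteq\mathbb N$ with ($e\cdot m\simeq n$ and $n\in\perp\!\!\!\perp$) $\Rightarrow\langle e,m\rangle\in\perp\!\!\!\perp$. For $\mathcal L_{\mathrm R}^{<\gamma}$-sentences define $\|A\|^{<\gamma}_{\perp\!\!\!\perp}\subseteq\mathbb N$ inductively: $n\in\|s=t\|$ iff ($s=t$ true in $\mathbb N$ implies $n\in\perp\!\!\!\perp$); $n\in\|m\in{\perp\!\!\!\perp}\|$ iff ($m\in\perp\!\!\!\perp$ implies $n\in\perp\!\!\!\perp$); $n\in\|m\,F_\beta\,l\|$ iff $l=\ulcorner A\urcorner$ for some $\mathcal L_{\mathrm R}^{<\beta}$-sentence $A$ and $n\in\|\bar m\in\|A\|\|$; $n\in\|m\,T_\beta\,l\|$ iff $l=\ulcorner A\urcorner$ for some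 $\mathcal L_{\mathrm R}^{<\beta}$-sentence $A$ and $n\in\|\bar m\in|A|\|$; $\|A\to B\|=\{n:(n)_0\in|A|,(n)_1\in\|B\|\}$; $\|\forall xA\|=\{n:(n)_1\in\|A(\overline{(n)_0})\|\}$; $|A|^{<\gamma}_{\perp\!\!\!\perp}=\{n:\forall m\in\|A\|\ \langle n,m\rangle\in\perp\!\!\!\perp\}$. Let $\mathbb F^\beta=\{(n,\ulcorner A\urcorner):A\in\mathrm{Sent}^{<\beta}_{\mathrm R},n\in\|A\|^{<\gamma}_{\perp\!\!\!\perp}\}$, $\mathbb T^\beta=\{(n,\ulcorner A\urcorner):A\in\mathrm{Sent}^{<\beta}_{\mathrm R},n\in|A|^{<\gamma}_{\perp\!\!\!\perp}\}$. $\langle{\perp\!\!\!\perp},<\gamma\rangle$ denotes the $\mathcal L_{\mathrm R}^{<\gamma}$-structure $\langle\mathbb N,\perp\!\!\!\perp,(\mathbb F^\beta)_{\beta<\gamma},(\mathbb T^\beta)_{\beta<\gamma}\rangle$. *)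

(* Defs.v *)
From Stdlib Require Import Arith List Cantor ClassicalEpsilon.
Import ListNotations.

Definition pairN (x y : nat) : nat := Cantor.to_nat (x, y).
Definition p0N (n : nat) : nat := fst (Cantor.of_nat n).
Definition p1N (n : nat) : nat := snd (Cantor.of_nat n).

(* Primitive recursive function expressions (names of the function     *)
(* missing arguments default to 0, extra ones are ignored.             *)
Inductive PR : Type :=
| PRzero : PR
| PRsucc : PR
| PRproj : nat -> PR
| PRcomp : PR -> PRs -> PR
| PRrec  : PR -> PR -> PR
with PRs : Type :=
| PRnil  : PRs
| PRcons : PR -> PRs -> PRs.

Fixpoint pr_eval (f : PR) (args : list nat) {struct f} : nat :=
  match f with
  | PRzero => 0
  | PRsucc => S (hd 0 args)
  | PRproj i => nth i args 0
  | PRcomp g gs => pr_eval g (prs_eval gs args)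
  | PRrec g h =>
      let rest := tl args in
      (fix r (k : nat) : nat :=
         match k with
         | 0 => pr_eval g rest
         | S k' => pr_eval h (k' :: r k' :: rest)
         end) (hd 0 args)
  end
with prs_eval (gs : PRs) (args : list nat) {struct gs} : list nat :=
  match gs with
  | PRnil => []
  | PRcons g gs' => pr_eval g args :: prs_eval gs' args
  end.

Fixpoint code_pr (f : PR) : nat :=
  match f with
  | PRzero => pairN 0 0
  | PRsucc => pairN 1 0
  | PRproj i => pairN 2 i
  | PRcomp g gs => pairN 3 (pairN (code_pr g) (code_prs gs))
  | PRrec g h => pairN 4 (pairN (code_pr g) (code_pr h))
  end
with code_prs (gs : PRs) : nat :=
  match gs with
  | PRnil => 0
  | PRcons g gs' => S (pairN (code_pr g) (code_prs gs'))
  end.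

Inductive MR : Type :=
| MRzero : MR
| MRsucc : MR
| MRproj : nat -> MR
| MRcomp : MR -> MRs -> MR
| MRrec  : MR -> MR -> MR
| MRmu   : MR -> MR
with MRs : Type :=
| MRnil  : MRs
| MRcons : MR -> MRs -> MRs.

Inductive mr_eval : MR -> list nat -> nat -> Prop :=
| ev_zero args : mr_eval MRzero args 0
| ev_succ args : mr_eval MRsucc args (S (hd 0 args))
| ev_proj i args : mr_eval (MRproj i) args (nth i args 0)
| ev_comp g gs args vs n :
    mrs_eval gs args vs -> mr_eval g vs n -> mr_eval (MRcomp g gs) args n
| ev_rec g h args n :
    mr_rec_eval g h (tl args) (hd 0 args) n -> mr_eval (MRrec g h) args n
| ev_mu f args k :
    mr_eval f (k :: args) 0 ->
    (forall j, j < k -> exists v, v <> 0 /\ mr_eval f (j :: args) v) ->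
    mr_eval (MRmu f) args k
with mrs_eval : MRs -> list nat -> list nat -> Prop :=
| evs_nil args : mrs_eval MRnil args []
| evs_cons g gs args v vs :
    mr_eval g args v -> mrs_eval gs args vs -> mrs_eval (MRcons g gs) args (v :: vs)
with mr_rec_eval : MR -> MR -> list nat -> nat -> nat -> Prop :=
| evr_0 g h rest n : mr_eval g rest n -> mr_rec_eval g h rest 0 n
| evr_S g h rest k m n :
    mr_rec_eval g h rest k m -> mr_eval h (k :: m :: rest) n ->
    mr_rec_eval g h rest (S k) n.

Fixpoint code_mr (f : MR) : nat :=
  match f with
  | MRzero => pairN 0 0
  | MRsucc => pairN 1 0
  | MRproj i => pairN 2 i
  | MRcomp g gs => pairN 3 (pairN (code_mr g) (code_mrs gs))
  | MRrec g h => pairN 4 (pairN (code_mr g) (code_mr h))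
  | MRmu g => pairN 5 (code_mr g)
  end
with code_mrs (gs : MRs) : nat :=
  match gs with
  | MRnil => 0
  | MRcons g gs' => S (pairN (code_mr g) (code_mrs gs'))
  end.

(* e . m ~ n : the e-th partial recursive function on m halts with output n
   (numbers that are not codes of programs index the nowhere-defined function) *)
Definition kleene_app (e m n : nat) : Prop :=
  exists f, code_mr f = e /\ mr_eval f [m] n.

Definition is_pole (P : nat -> Prop) : Prop :=
  forall e m n, kleene_app e m n -> P n -> P (pairN e m).

Record OrdNotation : Type := {
  OT : nat -> bool;
  olt : nat -> nat -> bool;
  olt_OT : forall x y, olt x y = true -> OT x = true /\ OT y = true;
  olt_trans : forall x y z, olt x y = true -> olt y z = true -> olt x z = true;
  olt_total : forall x y, OT x = true -> OT y = true ->
                olt x y = true \/ x = y \/ olt y x = true;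
  olt_wf : well_founded (fun x y => olt x y = true)
}.

Inductive term : Type :=
| Tvar  : nat -> term
| Tzero : term
| Tfun  : PR -> terms -> term
| Tpair : term -> term -> term
| Tp0   : term -> term
| Tp1   : term -> term
| TdotF : term -> term -> term
| TdotT : term -> term -> term
with terms : Type :=
| Tnil  : terms
| Tcons : term -> terms -> terms.

Inductive formula : Type :=
| Feq   : term -> term -> formula
| Fpole : term -> formula
| FF    : nat -> term -> term -> formula
| FT    : nat -> term -> term -> formula
| Fimp  : formula -> formula -> formula
| Fall  : formula -> formula.             (* binds de Bruijn variable 0 *)

Fixpoint numeral (n : nat) : term :=
  match n with
  | 0 => Tzero
  | S k => Tfun PRsucc (Tcons (numeral k) Tnil)
  end.

Definition Fbot : formula := Feq Tzero (numeral 1).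
Definition Fnot (A : formula) : formula := Fimp A Fbot.
Definition Fand (A B : formula) : formula := Fnot (Fimp A (Fnot B)).

Definition scons {X : Type} (x : X) (s : nat -> X) (i : nat) : X :=
  match i with 0 => x | S j => s j end.

Fixpoint tsubst (s : nat -> term) (t : term) : term :=
  match t with
  | Tvar i => s i
  | Tzero => Tzero
  | Tfun f ts => Tfun f (tssubst s ts)
  | Tpair a b => Tpair (tsubst s a) (tsubst s b)
  | Tp0 a => Tp0 (tsubst s a)
  | Tp1 a => Tp1 (tsubst s a)
  | TdotF a b => TdotF (tsubst s a) (tsubst s b)
  | TdotT a b => TdotT (tsubst s a) (tsubst s b)
  end
with tssubst (s : nat -> term) (ts : terms) : terms :=
  match ts with
  | Tnil => Tnil
  | Tcons t ts' => Tcons (tsubst s t) (tssubst s ts')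
  end.

Definition tlift (t : term) : term := tsubst (fun i => Tvar (S i)) t.

Fixpoint tclosed (k : nat) (t : term) : Prop :=
  match t with
  | Tvar i => i < k
  | Tzero => True
  | Tfun _ ts => tsclosed k ts
  | Tpair a b | TdotF a b | TdotT a b => tclosed k a /\ tclosed k b
  | Tp0 a | Tp1 a => tclosed k a
  end
with tsclosed (k : nat) (ts : terms) : Prop :=
  match ts with
  | Tnil => True
  | Tcons t ts' => tclosed k t /\ tsclosed k ts'
  end.

Fixpoint fclosed (k : nat) (A : formula) : Prop :=
  match A with
  | Feq t u | FF _ t u | FT _ t u => tclosed k t /\ tclosed k u
  | Fpole t => tclosed k t
  | Fimp A B => fclosed k A /\ fclosed k B
  | Fall A => fclosed (S k) A
  end.

Definition sentence (A : formula) : Prop := fclosed 0 A.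

Fixpoint levels_below (O : OrdNotation) (beta : nat) (A : formula) : Prop :=
  match A with
  | Feq _ _ | Fpole _ => True
  | FF d _ _ | FT d _ _ => olt O d beta = true
  | Fimp A B => levels_below O beta A /\ levels_below O beta B
  | Fall A => levels_below O beta A
  end.

Definition sentence_lt (O : OrdNotation) (beta : nat) (A : formula) : Prop :=
  sentence A /\ levels_below O beta A.

Fixpoint code_t (t : term) : nat :=
  match t with
  | Tvar i => pairN 0 i
  | Tzero => pairN 1 0
  | Tfun f ts => pairN 2 (pairN (code_pr f) (code_ts ts))
  | Tpair a b => pairN 3 (pairN (code_t a) (code_t b))
  | Tp0 a => pairN 4 (code_t a)
  | Tp1 a => pairN 5 (code_t a)
  | TdotF a b => pairN 6 (pairN (code_t a) (code_t b))
  | TdotT a b => pairN 7 (pairN (code_t a) (code_t b))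
  end
with code_ts (ts : terms) : nat :=
  match ts with
  | Tnil => 0
  | Tcons t ts' => S (pairN (code_t t) (code_ts ts'))
  end.

Fixpoint code (A : formula) : nat :=
  match A with
  | Feq t u => pairN 0 (pairN (code_t t) (code_t u))
  | Fpole t => pairN 1 (code_t t)
  | FF d t u => pairN 2 (pairN d (pairN (code_t t) (code_t u)))
  | FT d t u => pairN 3 (pairN d (pairN (code_t t) (code_t u)))
  | Fimp A B => pairN 4 (pairN (code A) (code B))
  | Fall A => pairN 5 (code A)
  end.

(* Explicit refutation / realisation formulas.
   [inF sg s A] is  s in ||A[sg]||  (A's free variable i read as the term sg i);
   for a sentence A, [s in ||A||] is [inF Tvar s A]. The pending substitution
   implements the clause  s in ||forall x A(x)|| := (s)_1 in ||A((s)_0)||.      *)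
Fixpoint inF (sg : nat -> term) (s : term) (A : formula) : formula :=
  match A with
  | Feq t u => Fimp (Feq (tsubst sg t) (tsubst sg u)) (Fpole s)
  | Fpole t => Fimp (Fpole (tsubst sg t)) (Fpole s)
  | FF d t u => FF d s (TdotF (tsubst sg t) (tsubst sg u))
  | FT d t u => FF d s (TdotT (tsubst sg t) (tsubst sg u))
  | Fimp A B =>
      Fand (Fall (Fimp (inF (fun i => tlift (sg i)) (Tvar 0) A)
                       (Fpole (Tpair (tlift (Tp0 s)) (Tvar 0)))))
           (inF sg (Tp1 s) B)
  | Fall A => inF (scons (Tp0 s) sg) (Tp1 s) A
  end.

Definition inT (sg : nat -> term) (s : term) (A : formula) : formula :=
  Fall (Fimp (inF (fun i => tlift (sg i)) (Tvar 0) A)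
             (Fpole (Tpair (tlift s) (Tvar 0)))).

Definition in_F (s : term) (A : formula) : formula := inF Tvar s A.
Definition in_T (s : term) (A : formula) : formula := inT Tvar s A.

Definition dot_gen (mk : term -> formula -> formula) (x y : nat) : nat :=
  match excluded_middle_informative (exists A, sentence A /\ code A = y) with
  | left h => code (mk (numeral x) (proj1_sig (constructive_indefinite_description _ h)))
  | right _ => code (Feq (Tvar 0) (Tvar 0))   (* a non-sentence code *)
  end.
Definition dotF : nat -> nat -> nat := dot_gen in_F.
Definition dotT : nat -> nat -> nat := dot_gen in_T.

Fixpoint teval (rho : nat -> nat) (t : term) : nat :=
  match t with
  | Tvar i => rho i
  | Tzero => 0
  | Tfun f ts => pr_eval f (tseval rho ts)
  | Tpair a b => pairN (teval rho a) (teval rho b)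
  | Tp0 a => p0N (teval rho a)
  | Tp1 a => p1N (teval rho a)
  | TdotF a b => dotF (teval rho a) (teval rho b)
  | TdotT a b => dotT (teval rho a) (teval rho b)
  end
with tseval (rho : nat -> nat) (ts : terms) : list nat :=
  match ts with
  | Tnil => []
  | Tcons t ts' => teval rho t :: tseval rho ts'
  end.

Definition rho0 : nat -> nat := fun _ => 0.

(* Realisability sets ||A||^{<gamma}_pole, by well-founded recursion on *)
(* the level b and structural recursion on A (environment rho for the   *)
(* values of free variables, implementing substitution of numerals).    *)
Definition real_body (O : OrdNotation) (P : nat -> Prop) (b : nat)
  (rec : forall d, olt O d b = true -> formula -> (nat -> nat) -> nat -> Prop)
  : formula -> (nat -> nat) -> nat -> Prop :=
  fix go (A : formula) (rho : nat -> nat) (n : nat) {struct A} : Prop :=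
    match A with
    | Feq t u => teval rho t = teval rho u -> P n
    | Fpole t => P (teval rho t) -> P n
    | FF d t u => exists h : olt O d b = true, exists B,
        sentence_lt O d B /\ teval rho u = code B /\
        rec d h (in_F (numeral (teval rho t)) B) rho0 n
    | FT d t u => exists h : olt O d b = true, exists B,
        sentence_lt O d B /\ teval rho u = code B /\
        rec d h (in_T (numeral (teval rho t)) B) rho0 n
    | Fimp A B =>
        (forall m, go A rho m -> P (pairN (p0N n) m)) /\ go B rho (p1N n)
    | Fall A => go A (scons (p0N n) rho) (p1N n)
    end.

Definition real (O : OrdNotation) (P : nat -> Prop) : nat -> formula -> (nat -> nat) -> nat -> Prop :=
  Fix (olt_wf O) (fun _ => formula -> (nat -> nat) -> nat -> Prop) (real_body O P).

Definition Fset (O : OrdNotation) (P : nat -> Prop) (gamma : nat) (A : formula) (n : nat) : Prop :=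
  real O P gamma A rho0 n.
Definition Tset (O : OrdNotation) (P : nat -> Prop) (gamma : nat) (A : formula) (n : nat) : Prop :=
  forall m, Fset O P gamma A m -> P (pairN n m).

Definition FFrel (O : OrdNotation) (P : nat -> Prop) (gamma beta n l : nat) : Prop :=
  exists A, sentence_lt O beta A /\ l = code A /\ Fset O P gamma A n.
Definition TTrel (O : OrdNotation) (P : nat -> Prop) (gamma beta n l : nat) : Prop :=
  exists A, sentence_lt O beta A /\ l = code A /\ Tset O P gamma A n.

Fixpoint sat (O : OrdNotation) (P : nat -> Prop) (gamma : nat)
  (rho : nat -> nat) (A : formula) : Prop :=
  match A with
  | Feq t u => teval rho t = teval rho u
  | Fpole t => P (teval rho t)
  | FF b t u => olt O b gamma = true /\ FFrel O P gamma b (teval rho t) (teval rho u)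
  | FT b t u => olt O b gamma = true /\ TTrel O P gamma b (teval rho t) (teval rho u)
  | Fimp A B => sat O P gamma rho A -> sat O P gamma rho B
  | Fall A => forall n, sat O P gamma (scons n rho) A
  end.

Definition models (O : OrdNotation) (P : nat -> Prop) (gamma : nat) (A : formula) : Prop :=
  sat O P gamma rho0 A.

(* Main.v *)
Require Import Defs.
From Stdlib Require Import Arith List Lia Classical FunctionalExtensionality Cantor ClassicalEpsilon.
Import ListNotations.


Lemma pairN_inj a b c d : pairN a b = pairN c d -> a = c /\ b = d.
Proof. unfold pairN. intro H. apply Cantor.to_nat_inj in H. inversion H. auto. Qed.

Ltac pinj := repeat match goal with
  | H : pairN _ _ = pairN _ _ |- _ => apply pairN_inj in H; destruct H as [? ?]
  | H : S _ = S _ |- _ => injection H as H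
  end; try discriminate; subst.

Scheme PR_ind' := Induction for PR Sort Prop with PRs_ind' := Induction for PRs Sort Prop.
Combined Scheme PR_mut from PR_ind', PRs_ind'.
Scheme term_ind' := Induction for term Sort Prop with terms_ind' := Induction for terms Sort Prop.
Combined Scheme term_mut from term_ind', terms_ind'.

Lemma code_pr_inj : (forall f g, code_pr f = code_pr g -> f = g) /\
                    (forall f g, code_prs f = code_prs g -> f = g).
Proof.
  apply PR_mut; intros;
  [destruct g|destruct g|destruct g|destruct g|destruct g|destruct g|destruct g];
  simpl in *; pinj; try reflexivity; try discriminate;
  try (apply pairN_inj in H; destruct H; discriminate);
  try (apply pairN_inj in H1; destruct H1; discriminate);
  try (apply pairN_inj in H0; destruct H0; discriminate);
  f_equal; auto.
Qed.



Lemma code_t_inj : (forall f g, code_t f = code_t g -> f = g) /\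
                    (forall f g, code_ts f = code_ts g -> f = g).
Proof.
  apply term_mut; intros;
  [destruct g|destruct g|destruct g|destruct g|destruct g|destruct g|destruct g|destruct g|destruct g|destruct g];
  simpl in *; pinj; try reflexivity; try discriminate;
  repeat match goal with H : forall g, _ = _ -> _ = g |- _ => erewrite H by eassumption; clear H end;
  try (f_equal; apply (proj1 code_pr_inj); assumption);
  try reflexivity.
Qed.

Lemma code_inj : forall A B, code A = code B -> A = B.
Proof.
  induction A; destruct B; simpl; intro H; pinj; try reflexivity;
  repeat match goal with H : code_t _ = code_t _ |- _ => apply (proj1 code_t_inj) in H; subst end;
  try reflexivity;
  try (f_equal; auto).
Qed.


Lemma teval_subst_mut : (forall t rho sg, teval rho (tsubst sg t) = teval (fun i => teval rho (sg i)) t) /\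
  (forall ts rho sg, tseval rho (tssubst sg ts) = tseval (fun i => teval rho (sg i)) ts).
Proof.
  apply term_mut; intros; simpl; try reflexivity;
  repeat match goal with H : forall rho sg, _ = _ |- _ => rewrite H; clear H end; reflexivity.
Qed.

Lemma teval_subst t rho sg : teval rho (tsubst sg t) = teval (fun i => teval rho (sg i)) t.
Proof. apply teval_subst_mut. Qed.

Lemma teval_lift t rho m : teval (scons m rho) (tlift t) = teval rho t.
Proof. unfold tlift. rewrite teval_subst. reflexivity. Qed.

Lemma teval_numeral rho n : teval rho (numeral n) = n.
Proof. induction n; simpl; auto. Qed.

Lemma tclosed_subst_mut : (forall t k m sg, tclosed k t -> (forall i, i < k -> tclosed m (sg i)) -> tclosed m (tsubst sg t)) /\
  (forall ts k m sg, tsclosed k ts -> (forall i, i < k -> tclosed m (sg i)) -> tsclosed m (tssubst sg ts)).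
Proof.
  apply term_mut; intros; simpl in *; try tauto; try (intuition eauto).
Qed.

Lemma tclosed_lift t k : tclosed k t -> tclosed (S k) (tlift t).
Proof. intro H. eapply (proj1 tclosed_subst_mut); eauto. intros; simpl; lia. Qed.

Lemma tclosed_numeral n k : tclosed k (numeral n).
Proof. induction n; simpl; auto. Qed.


Lemma fclosed_inF : forall A k m sg s, fclosed k A -> (forall i, i < k -> tclosed m (sg i)) ->
  tclosed m s -> fclosed m (inF sg s A).
Proof.
  induction A; intros k m sg s HA Hsg Hs; simpl in *.
  - intuition; eapply (proj1 tclosed_subst_mut); eauto.
  - intuition; eapply (proj1 tclosed_subst_mut); eauto.
  - intuition; eapply (proj1 tclosed_subst_mut); eauto.
  - intuition; eapply (proj1 tclosed_subst_mut); eauto.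
  - destruct HA as [HA HB]. unfold Fand, Fnot, Fbot. simpl.
    repeat split; auto.
    + eapply IHA1; eauto. intros; apply tclosed_lift; auto. simpl; lia.
    + apply tclosed_lift; simpl; auto.
    + simpl; lia.
    + eapply IHA2; eauto.
  - eapply IHA; eauto. intros [|i] Hi; simpl; auto. apply Hsg; lia.
Qed.

Lemma levels_inF : forall A O b sg s, levels_below O b A <-> levels_below O b (inF sg s A).
Proof.
  induction A; intros; simpl; try tauto.
  unfold Fand, Fnot, Fbot; simpl. rewrite <- IHA1, <- IHA2. tauto.
  apply IHA.
Qed.

Lemma sentence_in_F O d x B : sentence_lt O d B -> sentence_lt O d (in_F (numeral x) B).
Proof.
  intros [H1 H2]. split.
  - unfold sentence, in_F. apply (fclosed_inF B 0 0); [exact H1| intros i Hi; inversion Hi | apply tclosed_numeral].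
  - apply levels_inF; auto.
Qed.

Lemma sentence_in_T O d x B : sentence_lt O d B -> sentence_lt O d (in_T (numeral x) B).
Proof.
  intros [H1 H2]. split.
  - unfold sentence, in_T, inT. simpl. split.
    + apply (fclosed_inF B 0 1); [exact H1| intros i Hi; inversion Hi | simpl; lia].
    + split. apply tclosed_lift, tclosed_numeral. simpl; lia.
  - simpl. split; auto. apply levels_inF; auto.
Qed.

Lemma levels_in_F O d x B : levels_below O d (in_F (numeral x) B) -> levels_below O d B.
Proof. apply levels_inF. Qed.
Lemma levels_in_T O d x B : levels_below O d (in_T (numeral x) B) -> levels_below O d B.
Proof. simpl. intros [H _]. eapply levels_inF; eauto. Qed.


Lemma real_eq O P b : real O P b = real_body O P b (fun d _ => real O P d).
Proof.
  unfold real. rewrite Fix_eq. reflexivity.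
  intros x f g H.
  assert (f = g) as ->.
  { apply functional_extensionality_dep; intro y.
    apply functional_extensionality_dep; intro p. apply H. }
  reflexivity.
Qed.

Lemma real_level : forall A O P b1 b2 rho n, levels_below O b1 A -> levels_below O b2 A ->
  (real O P b1 A rho n <-> real O P b2 A rho n).
Proof.
  induction A; intros O P b1 b2 rho k H1 H2; rewrite !real_eq; simpl in *.
  - tauto.
  - tauto.
  - split; intros [h [B HB]]; eauto.
  - split; intros [h [B HB]]; eauto.
  - destruct H1, H2.
    pose proof (fun rho k0 => IHA1 O P b1 b2 rho k0 ltac:(auto) ltac:(auto)) as I1.
    pose proof (fun rho k0 => IHA2 O P b1 b2 rho k0 ltac:(auto) ltac:(auto)) as I2.
    rewrite !real_eq in I1, I2. simpl in I1, I2.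
    split; intros [Ha Hb]; split; try (intros m Hm; apply Ha; apply I1; auto); apply I2; auto.
  - pose proof (fun rho k0 => IHA O P b1 b2 rho k0 ltac:(auto) ltac:(auto)) as I.
    rewrite !real_eq in I. simpl in I. apply I.
Qed.


Lemma levels_mono O : forall X d g, levels_below O d X -> olt O d g = true -> levels_below O g X.
Proof.
  induction X; intros d g H1 H2; simpl in *; try tauto.
  - eapply olt_trans; eauto.
  - eapply olt_trans; eauto.
  - destruct H1; split; eauto.
  - eauto.
Qed.

Lemma dot_gen_spec mk x y :
  (exists B, sentence B /\ y = code B /\ dot_gen mk x y = code (mk (numeral x) B)) \/
  ((~ exists A, sentence A /\ code A = y) /\ dot_gen mk x y = code (Feq (Tvar 0) (Tvar 0))).
Proof.
  unfold dot_gen. destruct excluded_middle_informative as [h|h].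
  - left. destruct (constructive_indefinite_description _ h) as [B [HB1 HB2]]. simpl.
    exists B. auto.
  - right. auto.
Qed.

Lemma FF_case O P gamma mk
  (Hs: forall d x B, sentence_lt O d B -> sentence_lt O d (mk (numeral x) B))
  (Hl: forall d x B, levels_below O d (mk (numeral x) B) -> levels_below O d B) d x y n :
 (olt O d gamma = true /\ exists C, sentence_lt O d C /\ dot_gen mk x y = code C /\ real O P gamma C rho0 n)
 <-> (exists h: olt O d gamma = true, exists B, sentence_lt O d B /\ y = code B /\ real O P d (mk (numeral x) B) rho0 n).
Proof.
  split.
  - intros [h [C [HC [Hd Hr]]]]. exists h.
    destruct (dot_gen_spec mk x y) as [[B [HB [Hy Hdot]]] | [_ Hdot]].
    + rewrite Hdot in Hd. apply code_inj in Hd. subst C.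
      exists B. split; [split; [auto| eapply Hl; apply HC]|]. split; auto.
      refine (proj1 (real_level _ O P gamma d _ _ _ _) Hr).
      * eapply levels_mono; [apply HC|exact h].
      * apply HC.
    + rewrite Hdot in Hd. apply code_inj in Hd. subst C.
      destruct HC as [HC _]. simpl in HC. destruct HC as [HC _]. inversion HC.
  - intros [h [B [HB [Hy Hr]]]]. split; [exact h|].
    destruct (dot_gen_spec mk x y) as [[B' [HB' [Hy' Hdot]]] | [Hn Hdot]].
    + assert (B' = B) by (apply code_inj; congruence). subst B'.
      exists (mk (numeral x) B). split; [auto|]. split; [auto|].
      refine (proj1 (real_level _ O P d gamma _ _ _ _) Hr).
      * apply Hs; auto.
      * eapply levels_mono; [apply Hs; exact HB|exact h].
    + exfalso. apply Hn. exists B. split; [apply HB|auto].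
Qed.


Lemma real_imp O P b A B rho n : real O P b (Fimp A B) rho n <->
  (forall m, real O P b A rho m -> P (pairN (p0N n) m)) /\ real O P b B rho (p1N n).
Proof. rewrite real_eq. reflexivity. Qed.

Lemma real_all O P b A rho n : real O P b (Fall A) rho n <-> real O P b A (scons (p0N n) rho) (p1N n).
Proof. rewrite real_eq. reflexivity. Qed.

Lemma sat_Fand O P g rho X Y : sat O P g rho (Fand X Y) <-> sat O P g rho X /\ sat O P g rho Y.
Proof. simpl. assert (0 = 1 <-> False) by (split; [discriminate|tauto]). rewrite H. tauto. Qed.

Lemma sat_inF O P gamma : forall A rho sg s,
  sat O P gamma rho (inF sg s A) <-> real O P gamma A (fun i => teval rho (sg i)) (teval rho s).
Proof.
  induction A; intros rho sg s.
  - rewrite real_eq; simpl; rewrite ?teval_subst. tauto.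
  - rewrite real_eq; simpl; rewrite ?teval_subst. tauto.
  - rewrite real_eq; simpl; rewrite ?teval_subst.
    unfold FFrel, Fset. apply (FF_case O P gamma in_F).
    + intros; apply sentence_in_F; auto.
    + intros; eapply levels_in_F; eauto.
  - rewrite real_eq; simpl; rewrite ?teval_subst.
    unfold FFrel, Fset. apply (FF_case O P gamma in_T).
    + intros; apply sentence_in_T; auto.
    + intros; eapply levels_in_T; eauto.
  - rewrite real_imp. cbn [inF]. rewrite sat_Fand, IHA2. cbn [sat teval].
    assert (Hx : (forall n, sat O P gamma (scons n rho) (inF (fun i => tlift (sg i)) (Tvar 0) A1) ->
        P (pairN (teval (scons n rho) (tlift (Tp0 s))) n)) <->
      (forall m, real O P gamma A1 (fun i => teval rho (sg i)) m ->
        P (pairN (p0N (teval rho s)) m))).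
    { split; intros H m Hm.
      - specialize (H m). rewrite IHA1 in H. rewrite teval_lift in H. simpl in H.
        apply H. simpl.
        replace (fun i => teval (scons m rho) (tlift (sg i))) with (fun i => teval rho (sg i)); auto.
        apply functional_extensionality; intro; rewrite teval_lift; auto.
      - rewrite IHA1 in Hm. rewrite teval_lift. simpl. apply H.
        replace (fun i => teval rho (sg i)) with (fun i => teval (scons m rho) (tlift (sg i))); auto.
        apply functional_extensionality; intro; rewrite teval_lift; auto. }
    rewrite Hx. tauto.
  - rewrite real_all. simpl. rewrite IHA.
    replace (fun i => teval rho (scons (Tp0 s) sg i)) with (scons (p0N (teval rho s)) (fun i => teval rho (sg i))); [tauto|].
    apply functional_extensionality; intros [|i]; reflexivity.
Qed.


Theorem lemma10 (O : OrdNotation) (gamma : nat) (P : nat -> Prop) (beta : nat)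
  (Hgamma : OT O gamma = true) (HP : is_pole P) (Hbeta : olt O beta gamma = true)
  (A : formula) (HA : sentence_lt O beta A) (a : nat) :
  (models O P gamma (FF beta (numeral a) (numeral (code A))) <->
   models O P gamma (in_F (numeral a) A)) /\
  (models O P gamma (FT beta (numeral a) (numeral (code A))) <->
   models O P gamma (in_T (numeral a) A)).
Proof.
  unfold models. split.
  - cbn [sat]. rewrite !teval_numeral. unfold in_F. rewrite sat_inF. rewrite teval_numeral.
    change (fun i => teval rho0 (Tvar i)) with rho0.
    unfold FFrel, Fset. split.
    + intros [_ [B [_ [HB Hr]]]]. apply code_inj in HB. subst B. exact Hr.
    + intro Hr. split; [exact Hbeta|]. exists A. auto.
  - cbn [sat]. rewrite !teval_numeral. unfold in_T, inT. cbn [sat].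
    assert (Hx : (forall n, sat O P gamma (scons n rho0) (inF (fun i => tlift (Tvar i)) (Tvar 0) A) ->
        P (teval (scons n rho0) (Tpair (tlift (numeral a)) (Tvar 0)))) <->
      Tset O P gamma A a).
    { unfold Tset, Fset. split; intros H m Hm.
      - specialize (H m). rewrite sat_inF in H. cbn [teval] in H. rewrite teval_lift, teval_numeral in H.
        apply H. exact Hm.
      - rewrite sat_inF in Hm. cbn [teval]. rewrite teval_lift, teval_numeral. apply H. exact Hm. }
    rewrite Hx.
    unfold TTrel. split.
    + intros [_ [B [_ [HB Hr]]]]. apply code_inj in HB. subst B. exact Hr.
    + intro Hr. split; [exact Hbeta|]. exists A. auto.
Qed.
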